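(* Let $G$ and $H$ be Left dead-ends with $G\neq 0$ and $H\neq 0$. Then no Left dead-end $K$ with $K=G+H$ has $0$ as a Right option.
   Context: Games are finite partizan games; $o(G)$ is the misère outcome class (ordered $\mathscr{L}>\mathscr{N}>\mathscr{R}$, $\mathscr{L}>\mathscr{P}>\mathscr{R}$). A universe is a set of games closed under options, disjunctive sums, conjugates, and forming $\{\mathscr{G}^L\mid\mathscr{G}^R\}$ from nonempty finite subsets of it; $G\geq_\mathcal{U}H$ means $o(G+X)\geq o(H+X)$ for all $X\in\mathcal{U}$. A Left dead-end is a game all of whose subpositions have no Left option. For Left dead-ends, $G\geq H$ means $G\geq_\mathcal{U}H$ for every universe $\mathcal{U}$, and $G=H$ means $G\geq H$ and $H\geq G$. *)

(* Defs.v *)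
From Stdlib Require Import List.
Import ListNotations.

Inductive game : Type := Game : list game -> list game -> game.

Definition leftOpts (G : game) : list game := let (l, _) := G in l.
Definition rightOpts (G : game) : list game := let (_, r) := G in r.

Definition zero : game := Game [] [].

(* Disjunctive sum: G + H = {G^L + H, G + H^L | G^R + H, G + H^R}. *)
Fixpoint gadd (G H : game) {struct G} : game :=
  let fix addG (H : game) : game :=
    match G, H with
    | Game gl gr, Game hl hr =>
        Game (map (fun g => gadd g H) gl ++ map addG hl)
             (map (fun g => gadd g H) gr ++ map addG hr)
    end in
  addG H.

Fixpoint gconj (G : game) : game :=
  match G with Game l r => Game (map gconj r) (map gconj l) end.

(* Misere play: a player with no move available wins. *)
(* leftFirst G : Left wins G moving first; leftSecond G : Left wins G when
   Right moves first. *)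
Fixpoint leftFirst (G : game) : bool :=
  match G with
  | Game l r =>
      match l with
      | [] => true
      | _ => existsb (fun g =>
               match g with
               | Game _ r' =>
                   match r' with
                   | [] => false
                   | _ => forallb leftFirst r'
                   end
               end) l
      end
  end.

Definition leftSecond (G : game) : bool :=
  match rightOpts G with
  | [] => false
  | r => forallb leftFirst r
  end.

Inductive outcome : Type := oL | oN | oP | oR.

Definition o (G : game) : outcome :=
  match leftFirst G, leftSecond G with
  | true, true => oL
  | true, false => oN
  | false, true => oP
  | false, false => oR
  end.

Definition outcome_ge (a b : outcome) : Prop :=
  match a, b with
  | oL, _ => True
  | oN, oN | oN, oR => True
  | oP, oP | oP, oR => True
  | oR, oR => True
  | _, _ => False
  end.

Inductive subpos : game -> game -> Prop :=
  | subpos_refl G : subpos G G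
  | subpos_left S G g : In g (leftOpts G) -> subpos S g -> subpos S G
  | subpos_right S G g : In g (rightOpts G) -> subpos S g -> subpos S G.

Definition left_dead_end (G : game) : Prop :=
  forall S, subpos S G -> leftOpts S = [].

Definition is_universe (U : game -> Prop) : Prop :=
  (forall G g, U G -> In g (leftOpts G) \/ In g (rightOpts G) -> U g) /\
  (forall G H, U G -> U H -> U (gadd G H)) /\
  (forall G, U G -> U (gconj G)) /\
  (forall L R, L <> [] -> R <> [] ->
     (forall x, In x L -> U x) -> (forall x, In x R -> U x) -> U (Game L R)).

Definition ge_in (U : game -> Prop) (G H : game) : Prop :=
  forall X, U X -> outcome_ge (o (gadd G X)) (o (gadd H X)).

Definition gge (G H : game) : Prop :=
  forall U, is_universe U -> ge_in U G H.

Definition geq (G H : game) : Prop := gge G H /\ gge H G.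

(* Main.v *)
Require Import Defs.
From Stdlib Require Import List.
Import ListNotations.

Lemma gadd_eq gl gr hl hr : gadd (Game gl gr) (Game hl hr) =
  Game (map (fun g => gadd g (Game hl hr)) gl ++ map (gadd (Game gl gr)) hl)
       (map (fun g => gadd g (Game hl hr)) gr ++ map (gadd (Game gl gr)) hr).
Proof. reflexivity. Qed.

Lemma gadd_left0 a b : leftOpts a = [] -> leftOpts b = [] -> leftOpts (gadd a b) = [].
Proof. destruct a as [al ar], b as [bl br]; simpl; intros -> ->. reflexivity. Qed.

Lemma gadd_right_in a b y : In y (rightOpts (gadd a b)) ->
  (exists a', In a' (rightOpts a) /\ y = gadd a' b) \/
  (exists b', In b' (rightOpts b) /\ y = gadd a b').
Proof.
  destruct a as [al ar], b as [bl br]. rewrite gadd_eq. simpl.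
  intros Hy. apply in_app_or in Hy as [Hy|Hy]; apply in_map_iff in Hy as [z [<- Hz]].
  - left; eauto.
  - right; eauto.
Qed.

Lemma ld_left G : left_dead_end G -> leftOpts G = [].
Proof. intros H; apply H; constructor. Qed.

Lemma ld_right G g : left_dead_end G -> In g (rightOpts G) -> left_dead_end g.
Proof. intros H Hg S HS. apply H. eapply subpos_right; eauto. Qed.

Definition one : game := Game [zero] [].

Lemma LF0 y : leftOpts y = [] -> leftFirst (gadd y zero) = true.
Proof. destruct y as [yl yr]; intros Hl; simpl in Hl; subst. unfold zero; rewrite gadd_eq. reflexivity. Qed.

Lemma LF x : leftOpts x = [] -> rightOpts x <> [] ->
  (forall y, In y (rightOpts x) -> leftOpts y = []) -> leftFirst (gadd x one) = true.
Proof.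
  destruct x as [xl xr]; intros Hl Hne Hy; simpl in Hl, Hne, Hy; subst xl.
  unfold one; rewrite gadd_eq. cbn [map app leftFirst existsb].
  unfold zero. rewrite gadd_eq. cbn [map app]. rewrite !app_nil_r.
  destruct (map (fun g => gadd g (Game [] [])) xr) eqn:E.
  { destruct xr; [congruence| discriminate]. }
  rewrite <- E. rewrite Bool.orb_false_r.
  apply forallb_forall. intros z Hz. apply in_map_iff in Hz as [w [<- Hw]].
  apply LF0. auto.
Qed.

Lemma full_univ : is_universe (fun _ => True).
Proof. repeat split; auto. Qed.

Lemma ne_zero G : left_dead_end G -> ~ geq G zero -> rightOpts G <> [].
Proof.
  intros HG Hn He. apply Hn. destruct G as [gl gr]. simpl in He; subst.
  pose proof (ld_left _ HG) as E; simpl in E; subst. unfold geq, gge, ge_in.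
  split; intros; destruct (o _); simpl; auto.
Qed.

Theorem mainTheorem14 :
  forall G H : game,
    left_dead_end G -> left_dead_end H ->
    ~ geq G zero -> ~ geq H zero ->
    forall K : game, left_dead_end K -> geq K (gadd G H) ->
      ~ In zero (rightOpts K).
Proof.
  intros G H HG HH nG nH K HK [HKge _] Hz.
  specialize (HKge _ full_univ one I).
  (* o (K + 1) = oN *)
  assert (Hs1 : leftSecond (gadd K one) = false).
  { destruct K as [kl kr]. unfold leftSecond, one. rewrite gadd_eq. simpl.
    rewrite app_nil_r. simpl in Hz.
    destruct (map _ kr) eqn:E. reflexivity.
    change ((leftFirst g && forallb leftFirst l)%bool) with (forallb leftFirst (g::l)).
    rewrite <- E. apply Bool.not_true_iff_false. intro F.
    rewrite forallb_forall in F.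
    assert (Hin : In (gadd zero (Game [zero] [])) (map (fun g => gadd g (Game [zero] [])) kr)).
    { exact (in_map (fun g => gadd g (Game [zero] [])) _ _ Hz). }
    specialize (F _ Hin). vm_compute in F. discriminate. }
  assert (Hf1 : leftFirst (gadd K one) = true).
  { apply LF. apply ld_left; auto. intro E; rewrite E in Hz; exact Hz.
    intros y Hy. apply ld_left. eapply ld_right; eauto. }
  assert (Hs2 : leftSecond (gadd (gadd G H) one) = true).
  { pose proof (ne_zero _ HG nG) as gne. pose proof (ne_zero _ HH nH) as hne.
    assert (Hx : forall x, In x (rightOpts (gadd G H)) -> leftFirst (gadd x one) = true).
    { intros x Hx. destruct (gadd_right_in _ _ _ Hx) as [[g [Hg ->]]|[h [Hh ->]]].
      - pose proof (ld_right _ _ HG Hg) as Hgd.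
        apply LF. apply gadd_left0; apply ld_left; auto.
        + destruct g as [gl gr'], H as [hl hr]. rewrite gadd_eq. simpl.
          simpl in hne. destruct hr; [congruence|]. simpl. destruct (map _ gr'); discriminate.
        + intros y Hy. destruct (gadd_right_in _ _ _ Hy) as [[a [Ha ->]]|[b [Hb ->]]];
            apply gadd_left0; apply ld_left; eauto using ld_right.
      - pose proof (ld_right _ _ HH Hh) as Hhd.
        apply LF. apply gadd_left0; apply ld_left; auto.
        + destruct G as [gl gr'], h as [hl hr]. rewrite gadd_eq. simpl.
          simpl in gne. destruct gr'; [congruence|]. simpl. discriminate.
        + intros y Hy. destruct (gadd_right_in _ _ _ Hy) as [[a [Ha ->]]|[b [Hb ->]]];
            apply gadd_left0; apply ld_left; eauto using ld_right. }
    destruct (gadd G H) as [sl sr] eqn:ES.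
    unfold leftSecond, one. rewrite gadd_eq. simpl. rewrite app_nil_r.
    assert (sr <> []).
    { destruct G as [gl gr'], H as [hl hr]. rewrite gadd_eq in ES. injection ES as _ <-.
      simpl in gne. destruct gr'; [congruence|]. simpl. discriminate. }
    destruct sr as [|s ss]; [congruence|].
    change (forallb leftFirst (map (fun g => gadd g (Game [zero] [])) (s::ss)) = true).
    apply forallb_forall. intros z Hz'. apply in_map_iff in Hz' as [w [<- Hw]].
    apply Hx. exact Hw. }
  unfold o in HKge. rewrite Hs1, Hf1, Hs2 in HKge.
  destruct (leftFirst (gadd (gadd G H) one)); simpl in HKge; exact HKge.
Qed.
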